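(* For all integers $n\ge0$ and $d\ge1$, \[ \sum_{n_1>n_2>\cdots>n_d>n}\frac{a_{n_1}}{(2n_1-1)\cdots(2n_d-1)}=a_n . \]
   Context: $a_0=1$ and $a_n=\frac{1}{4^n}\binom{2n}{n}$ for $n\ge1$. *)

(* Defs.v *)
From HB Require Import structures.
From mathcomp Require Import all_boot all_order all_algebra.
From mathcomp Require Import all_classical all_reals all_analysis.
Set Implicit Arguments. Unset Strict Implicit. Unset Printing Implicit Defensive.
Import Order.TTheory GRing.Theory Num.Theory.
Local Open Scope ring_scope.

Definition a_seq (R : realType) (n : nat) : R :=
  if n is 0 then 1 else ('C(2 * n, n))%:R / 4 ^+ n.

(* Main.v *)
Require Import Defs.
From HB Require Import structures.
From mathcomp Require Import all_boot all_order all_algebra.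
From mathcomp Require Import all_classical all_reals all_analysis.
From mathcomp Require Import ring lra zify.
Import Order.TTheory GRing.Theory Num.Theory.
Local Open Scope classical_set_scope.
Local Open Scope ring_scope.

Arguments a_seq R n : simpl never.

Lemma binrec m : (m.+1 * 'C((m.+1).*2, m.+1) = 2 * (m.*2.+1) * 'C(m.*2, m))%N.
Proof.
have h1 := mul_bin_diag (m.*2.+2) m.
have h2 := mul_bin_down (m.*2.+1) m.
rewrite /= in h1 h2.
have e : (m.*2.+1 - m = m.+1)%N by lia.
rewrite e in h2.
have e2 : (m.+1).*2 = m.*2.+2 by rewrite doubleS.
rewrite e2 -h1.
apply/eqP; rewrite -(eqn_pmul2r (ltn0Sn m)); apply/eqP.
rewrite -mulnA (mulnC 'C(m.*2.+1, m)) -h2. lia.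
Qed.

Section A.
Variable R : realType.
Notation a := (a_seq R).
Lemma pos_neq0 (x y : R) : 0 < x -> 0 <= y -> x + y != 0.
Proof. by move=> *; rewrite gt_eqF //; lra. Qed.
Hint Resolve ler0n : core.

Lemma aE m : a m = ('C(m.*2, m))%:R / 4 ^+ m.
Proof. by case: m => [|m] //=; rewrite ?bin0 ?expr0 ?divr1 // -mul2n. Qed.

Lemma a_ge0 m : 0 <= a m.
Proof. by rewrite aE divr_ge0 // exprn_ge0. Qed.

Lemma aS m : a m.+1 = a m * (m.*2.+1)%:R / (m.*2.+2)%:R.
Proof.
rewrite !aE.
have h := binrec m.
have hC : ('C((m.+1).*2, m.+1))%:R = (2 * (m.*2.+1))%:R * ('C(m.*2, m))%:R / (m.+1)%:R :> R.
  apply: (@mulIf _ (m.+1)%:R); first by rewrite pnatr_eq0.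
  by rewrite divfK ?pnatr_eq0 // -!natrM mulnC h.
rewrite hC exprS.
have -> : (m.*2.+2)%:R = 2 * (m.+1)%:R :> R by rewrite -natrM mul2n doubleS.
rewrite !natrM.
field.
by rewrite pos_neq0 ?expf_neq0.
Qed.

Lemma akey m : a m.+1 / (2 * (m.+1)%:R - 1) = a m - a m.+1.
Proof.
rewrite aS.
have -> : 2 * (m.+1)%:R - 1 = (m.*2.+1)%:R :> R.
  by rewrite -natrM mul2n doubleS -addn1 natrD; ring.
field.
by rewrite !pos_neq0.
Qed.

Lemma abound m : a m ^+ 2 * (m.*2.+1)%:R <= 1.
Proof.
elim: m => [|m IH]; first by rewrite aE /= bin0 expr0 divr1 expr1n mul1r.
rewrite aS.
set x := a m ^+ 2 in IH *.
have -> : (a m * (m.*2.+1)%:R / (m.*2.+2)%:R) ^+ 2 * ((m.+1).*2.+1)%:R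
   = x * (m.*2.+1)%:R * ((m.*2.+1)%:R * (m.*2.+3)%:R / (m.*2.+2)%:R ^+ 2).
  rewrite /x doubleS. field. by rewrite pos_neq0.
apply: le_trans IH; apply: ler_piMr.
  by rewrite mulr_ge0 // /x exprn_ge0 // a_ge0.
rewrite ler_pdivrMr ?exprn_gt0 // ?ltr0Sn // mul1r -!natrM -natrX ler_nat.
nia.
Qed.

Lemma a0 k : a (maxn k N.-1) @[N --> \oo] --> 0.
Proof.
apply/cvgr0Pnorm_lt => eps eps0.
have [B hB] : exists B : nat, eps ^-2 < B%:R.
  by eexists; apply: archi_boundP; rewrite invr_ge0 exprn_ge0 // ltW.
near=> N.
set M := maxn k N.-1.
have hN : (B <= N)%N by near: N; apply: nbhs_infty_ge.
rewrite ger0_norm ?a_ge0 //.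
have hab := abound M.
have hy : eps ^-2 < (M.*2.+1)%:R.
  apply: (lt_le_trans hB); rewrite ler_nat /M; lia.
have y0 : 0 < (M.*2.+1)%:R :> R by rewrite ltr0Sn.
have h2 : a M ^+ 2 < eps ^+ 2.
  rewrite -(ltr_pM2r y0); apply: (le_lt_trans hab).
  rewrite -ltr_pdivrMl ?exprn_gt0 // mulr1.
  exact: hy.
have := a_ge0 M; nra.
Unshelve. all: by end_near.
Qed.

Lemma aL c k : 0 <= c ->
  \esum_(m in [set m | (k < m)%N]) (c * (a m / (2 * m%:R - 1)))%:E = (c * a k)%:E.
Proof.
move=> c0.
have f0 m : (k < m)%N -> (0 <= (c * (a m / (2 * m%:R - 1)))%:E)%E.
  move=> km; rewrite lee_fin mulr_ge0 // divr_ge0 ?a_ge0 //.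
  case: m km => // m _; rewrite -natrM mulnS; lra.
rewrite -(nneseries_esum (P := fun m => (k < m)%N)) //.
have ps N : (\sum_(0 <= i < N | (k < i)%N) (c * (a i / (2 * i%:R - 1)))%:E)%E
            = (c * (a k - a (maxn k N.-1)))%:E.
  rewrite sumEFin; congr EFin.
  rewrite big_mkcond /=; elim: N => [|N IH].
    by rewrite big_geq // maxn0 subrr mulr0.
  rewrite big_nat_recr // IH.
  case: (ltnP k N) => h.
    case: N h IH => // N h IH.
    rewrite akey.
    have -> : maxn k N.+1.-1 = N by apply/maxn_idPr; lia.
    rewrite /=; ring.
  rewrite /= addr0.
  have -> : maxn k N.-1 = k by apply/maxn_idPl; lia.
  by [].
apply/cvg_lim.
  by [].
cbv beta.
rewrite (funext ps).
apply: cvg_EFin; first by apply: nearW.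
rewrite /comp /=.
have -> : c * a k = c * (a k - 0) by rewrite subr0.
apply: cvgMl_tmp.
apply: cvgB; first exact: cvg_cst.
exact: a0.
Qed.
End A.
Section B.
Variable R : realType.
Notation a := (a_seq R).

Lemma den_gt0 m : (0 < m)%N -> 0 < 2 * m%:R - 1 :> R.
Proof. by case: m => // m _; rewrite -natrM mulnS; lra. Qed.

Definition SS d k : set ('I_d.+1 -> nat) :=
  [set t | (forall i j : 'I_d.+1, (i < j)%N -> (t j < t i)%N) /\
           (forall i : 'I_d.+1, (k < t i)%N)].

Definition FF d (c : R) (t : 'I_d.+1 -> nat) : R :=
  c * (a (t ord0) / \prod_(i < d.+1) (2 * (t i)%:R - 1)).

Lemma FF_ge0 d c t : 0 <= c -> (forall i, (0 < t i)%N) -> 0 <= FF d c t.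
Proof.
move=> c0 ht; rewrite /FF mulr_ge0 // divr_ge0 ?a_ge0 //.
apply: prodr_ge0 => i _; have := ht i; case: (t i) => // m _.
Qed.

Definition ext d (m : nat) (t' : 'I_d.+1 -> nat) : 'I_d.+2 -> nat :=
  fun i => if (i < d.+1)%N then t' (inord i) else m.
Arguments ext {d}.

Lemma ext_widen d m t' (i : 'I_d.+1) : ext m t' (widen_ord (leqnSn _) i) = t' i.
Proof. by rewrite /ext /= ltn_ord inord_val. Qed.

Lemma ext_max d m t' : ext (d:=d) m t' ord_max = m.
Proof. by rewrite /ext /= ltnn. Qed.

Lemma ext0 d m t' : ext (d:=d) m t' ord0 = t' ord0.
Proof. by rewrite /ext /=; congr t'; apply: val_inj; rewrite /= inordK. Qed.

Lemma FF_ext d c m t' : FF d.+1 c (ext m t') = FF d (c / (2 * m%:R - 1)) t'.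
Proof.
rewrite /FF big_ord_recr /= ext_max ext0.
under eq_bigr do rewrite ext_widen.
by rewrite invfM; ring.
Qed.

Lemma main d : forall (c : R) k, 0 <= c ->
  \esum_(t in SS d k) (FF d c t)%:E = (c * a k)%:E.
Proof.
elim: d => [|d IH] c k c0.
  rewrite (reindex_esum [set m | (k < m)%N] _ (fun m => fun _ : 'I_1 => m)).
    rewrite -(@aL R c k c0); apply: eq_esum => m _.
    by rewrite /FF big_ord1.
  split.
  - move=> m /= km; split; last by [].
    by move=> i j; rewrite !ord1.
  - by move=> m1 m2 _ _ /= /(congr1 (fun f => f ord0)).
  - move=> t [_ ht]; exists (t ord0); first exact: ht.
    by apply: funext => i /=; rewrite (ord1 i).
rewrite (reindex_esum ([set m | (k < m)%N] `*`` (fun m => SS d m)) _ (fun p => ext p.1 p.2)).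
  rewrite -(esum_esum (a := fun m t' => (FF d.+1 c (ext m t'))%:E)); last first.
    move=> m t' /= km [_ ht]; rewrite lee_fin FF_ext FF_ge0 //.
      by rewrite divr_ge0 // ltW // den_gt0 //; lia.
    by move=> i; apply: leq_ltn_trans (ht i).
  rewrite -(@aL R c k c0); apply: eq_esum => m /= km.
  under eq_esum do rewrite FF_ext.
  rewrite IH; last by rewrite divr_ge0 // ltW // den_gt0 //; lia.
  by congr EFin; rewrite mulrAC -mulrA.
split.
- move=> [m t'] [/= km [hd hk]]; split.
  + move=> i j ij; rewrite /ext.
    case: ifP => hj; case: ifP => hi.
    * apply: hd; rewrite !inordK //.
    * by move: (ltn_ord j); lia.
    * exact: hk.
    * by move: (ltn_ord j); lia.
  + move=> i; rewrite /ext; case: ifP => _; last exact: km.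
    exact: ltn_trans km (hk _).
- move=> [m1 t1] [m2 t2] _ _ /= E.
  have hm : m1 = m2 by have := congr1 (fun f => f ord_max) E; rewrite /= !ext_max.
  have ht : t1 = t2.
    apply: funext => i.
    by have := congr1 (fun f => f (widen_ord (leqnSn _) i)) E; rewrite /= !ext_widen.
  by rewrite hm ht.
- move=> t [hd hk].
  exists (t ord_max, fun i => t (widen_ord (leqnSn _) i)).
    split => /=; first exact: hk.
    split.
      by move=> i j ij; apply: hd.
    by move=> i; apply: hd; rewrite /= ltn_ord.
  apply: funext => i /=; rewrite /ext.
  case: ifP => hi.
    by congr t; apply: val_inj; rewrite /= inordK.
  congr t; apply: val_inj => /=; move: (ltn_ord i); lia.
Qed.
End B.

Theorem corollary4p3 (R : realType) (n d : nat) (hd : (0 < d)%N) :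
  \esum_(t in [set t : 'I_d -> nat |
                 (forall i j : 'I_d, (i < j)%N -> (t j < t i)%N) /\
                 (forall i : 'I_d, (n < t i)%N)])
     ((a_seq R (t (Ordinal hd)) / \prod_(i < d) (2 * (t i)%:R - 1))%:E)
  = (a_seq R n)%:E.
Proof.
case: d hd => // d hd.
have -> : Ordinal hd = ord0 by apply: val_inj.
transitivity (\esum_(t in SS d n) (FF R d 1 t)%:E).
  by apply: eq_esum => t _; rewrite /FF mul1r.
by rewrite main // mul1r.
Qed.
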